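(* Let $\mathcal{G}^*=(\mathbb{V}^*,\mathbb{E}^* )$ be a graph that is either an ADMG or a C-DMG, let $\mathbb{W}^*\subseteq\mathbb{V}^*$, and let $\tilde{\pi}=\langle V_1,\dots,V_n\rangle$ be a walk in $\mathcal{G}^*$. If $\tilde{\pi}$ is $\mathbb{W}^*$-active (not blocked by $\mathbb{W}^*$), then its primary path $\tilde{\pi}_p$ is $\mathbb{W}^*$-active.
   Context: An ADMG is a graph with directed edges $\rightarrow$ and bidirected edges $\leftrightarrow$ whose directed edges form no directed cycle; a C-DMG is a graph with directed and bidirected edges (directed cycles and self-loops allowed) obtained from an ADMG by taking a partition of its vertices into clusters as vertices, with a directed (resp. bidirected) edge between clusters iff some members are so connected. A walk is a sequence of vertices with a specified edge between each consecutive pair. The primary path $\tilde{\pi}_p=\langle U_1,\dots,U_m\rangle$ of a walk $\tilde{\pi}=\langle V_1,\dots,V_n\rangle$ is defined by $U_1=V_1$ and $U_{k+1}=V_{j+1}$ where $j=\max\{i: V_i=U_k\}$, until $U_{k+1}=V_n$; the edge between $U_k$ and $U_{k+1}$ in $\tilde{\pi}_p$ is the edge (with the same type and orientation) between $V_j$ and $V_{j+1}$ in $\tilde{\pi}$. $\mathrm{De}(V)$ denotes the descendants of $V$ in $\mathcal{G}^*$, including $V$. A walk $\langle V_1,\dots,V_n\rangle$ is blocked by $\mathbb{W}^*$ if (1) $V_1\in\mathbb{W}^*$ or $V_n\in\mathbb{W}^*$; or (2) for some $1<i<n$ the walk contains $V_{i-1}\,*\!-\!*\,V_i\rightarrow V_{i+1}$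 or $V_{i-1}\leftarrow V_i\,*\!-\!*\,V_{i+1}$ (any edge type for $*\!-\!*$) with $V_i\in\mathbb{W}^*$; or (3) for some $1<i<n$ it contains $V_{i-1}\,*\!\!\rightarrow V_i\leftarrow\!\!*\,V_{i+1}$ (each edge directed into $V_i$ or bidirected) with $\mathrm{De}(V_i)\cap\mathbb{W}^*=\emptyset$. A walk not blocked is active. *)

(* Defs.v *)
From mathcomp Require Import all_boot.
Set Implicit Arguments. Unset Strict Implicit. Unset Printing Implicit Defensive.

Record mgraph (V : Type) := MGraph { dir : rel V ; bi : rel V }.

Definition is_ADMG (V : finType) (G : mgraph V) : Prop :=
  (forall u v, bi G u v = bi G v u) /\
  (forall u, ~~ bi G u u) /\
  (forall u v, dir G u v -> ~~ connect (dir G) v u).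

(* C-DMG: the cluster graph of some ADMG H on vertex type U with respect to a
   partition of U into (nonempty) clusters, given by a surjection f : U -> V
   (cluster c = f^-1 c). *)
Definition is_CDMG (V : finType) (G : mgraph V) : Prop :=
  exists (U : finType) (H : mgraph U) (f : U -> V),
    is_ADMG H /\ (forall c, exists u, f u = c) /\
    (forall c1 c2,
       (dir G c1 c2 <-> exists u1 u2, [/\ f u1 = c1, f u2 = c2 & dir H u1 u2]) /\
       (bi G c1 c2 <-> exists u1 u2, [/\ f u1 = c1, f u2 = c2 & bi H u1 u2])).

(* Edge of a walk between V_i and V_{i+1}:
   EFwd : V_i -> V_{i+1},  EBwd : V_i <- V_{i+1},  EBi : V_i <-> V_{i+1}. *)
Inductive ekind := EFwd | EBwd | EBi.

(* A walk <V_1,...,V_n> is encoded by its first vertex x = V_1 and the list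
   s = [(e_1,V_2); ...; (e_{n-1},V_n)], e_i being the edge between V_i, V_{i+1}. *)
Definition wverts (V : Type) (x : V) (s : seq (ekind * V)) : seq V :=
  x :: map snd s.

Definition edge_ok (V : Type) (G : mgraph V) (a : V) (e : ekind) (b : V) : bool :=
  match e with
  | EFwd => dir G a b
  | EBwd => dir G b a
  | EBi => bi G a b
  end.

Fixpoint is_walk (V : Type) (G : mgraph V) (x : V) (s : seq (ekind * V)) : bool :=
  match s with
  | [::] => true
  | (e, y) :: s' => edge_ok G x e y && is_walk G y s'
  end.

(* 0-based index of the last occurrence of x in the vertex list x :: map snd s *)
Definition last_idx (V : eqType) (x : V) (s : seq (ekind * V)) : nat :=
  (size (wverts x s)).-1 - index x (rev (wverts x s)).

(* Primary path: from the current vertex U_k = V_j (j the last occurrence),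
   step along the edge (V_j, V_{j+1}); stop when nothing remains (U_k = V_n). *)
Fixpoint primary_aux (V : eqType) (fuel : nat) (x : V) (s : seq (ekind * V))
  : seq (ekind * V) :=
  match fuel with
  | 0 => [::]
  | fuel'.+1 =>
    match drop (last_idx x s) s with
    | [::] => [::]
    | (e, y) :: rest => (e, y) :: primary_aux fuel' y rest
    end
  end.

Definition primary (V : eqType) (x : V) (s : seq (ekind * V)) : seq (ekind * V) :=
  primary_aux (size s) x s.

Definition De (V : finType) (G : mgraph V) (v : V) : {set V} :=
  [set w | connect (dir G) v w].

Definition blocked (V : finType) (G : mgraph V) (W : {set V})
    (x : V) (s : seq (ekind * V)) : Prop :=
  let vs := wverts x s in
  let n := size vs in
  let es := map fst s in
  (x \in W) \/ (last x (map snd s) \in W) \/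
  (exists i, [/\ 0 < i, i < n.-1 &
     let a := nth EBi es i.-1 in   (* edge between V_{i-1} and V_i *)
     let b := nth EBi es i in      (* edge between V_i and V_{i+1} *)
     let v := nth x vs i in
     ((b = EFwd \/ a = EBwd) /\ v \in W) \/
     ((a = EFwd \/ a = EBi) /\ (b = EBwd \/ b = EBi) /\ De G v :&: W = set0)]).

Definition active (V : finType) (G : mgraph V) (W : {set V})
    (x : V) (s : seq (ekind * V)) : Prop := ~ blocked G W x s.

(* Main.v *)
Require Import Defs.
From mathcomp Require Import all_boot.
From mathcomp Require Import zify.
Set Implicit Arguments. Unset Strict Implicit. Unset Printing Implicit Defensive.

Definition into (a : ekind) := match a with EBwd => false | _ => true end.
Definition intoR (b : ekind) := match b with EFwd => false | _ => true end.

Definition okv (V : finType) (G : mgraph V) (W : {set V}) (a : ekind) (v : V) (b : ekind) : bool :=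
  ~~ ((~~ intoR b || ~~ into a) && (v \in W)) && ~~ [&& into a, intoR b & De G v :&: W == set0].

Fixpoint iok (V : finType) (G : mgraph V) (W : {set V}) a v (s : seq (ekind * V)) : bool :=
  match s with [::] => true | (b,w)::s' => okv G W a v b && iok G W b w s' end.

Definition iok0 (V : finType) (G : mgraph V) (W : {set V}) (x : V) (s : seq (ekind * V)) :=
  match s with [::] => true | (a,v)::s' => iok G W a v s' end.

Lemma iok_cat (V : finType) (G : mgraph V) (W : {set V}) a v t c z r :
  iok G W a v (t ++ (c,z)::r) =
  [&& iok G W a v t, okv G W (last a (map fst t)) (last v (map snd t)) c & iok G W c z r].
Proof.
elim: t a v => [|[b w] t IH] a v //=.
by rewrite IH !andbA.
Qed.

Lemma walk_cat (V : finType) (G : mgraph V) x t c z r :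
  is_walk G x (t ++ (c,z)::r) =
  [&& is_walk G x t, edge_ok G (last x (map snd t)) c z & is_walk G z r].
Proof.
elim: t x => [|[b w] t IH] x //=.
by rewrite IH !andbA.
Qed.

Lemma collider_ex (V : finType) (G : mgraph V) (W : {set V}) a v b :
  into a -> intoR b -> okv G W a v b -> exists2 w, w \in W & connect (dir G) v w.
Proof.
move=> ha hb; rewrite /okv ha hb /= => /set0Pn [w].
by rewrite !inE => /andP [hc hw]; exists w.
Qed.

Lemma chain (V : finType) (G : mgraph V) (W : {set V}) t :
  forall a v b, into a -> intoR b -> is_walk G v t -> iok G W a v t ->
  okv G W (last a (map fst t)) (last v (map snd t)) b ->
  exists2 w, w \in W & connect (dir G) (last v (map snd t)) w.
Proof.
elim/last_ind: t => [|t [c z] IH] a v b ha hb.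
  by move=> _ _ /= hok; apply: collider_ex hok.
move=> hw hi hok.
move: hw hi; rewrite -cats1 walk_cat iok_cat => /and3P [hw he _] /and3P [hi hok' _].
rewrite !map_rcons !last_rcons in hok.
rewrite cats1 map_rcons last_rcons.
case hc: (into c); first by apply: collider_ex hc hb hok.
case: c hc he hok' hok => // _ /= he hok' _.
have [w hwW hcn] := IH a v EBwd ha erefl hw hi hok'.
exists w => //; exact: connect_trans (connect1 he) hcn.
Qed.

Lemma okvW (V : finType) (G : mgraph V) (W : {set V}) a v b :
  okv G W a v b -> v \in W -> into a && intoR b.
Proof.
rewrite /okv => /andP [h _] hv; move: h; rewrite hv andbT negb_or !negbK.
by rewrite andbC.
Qed.

Lemma okstep (V : finType) (G : mgraph V) (W : {set V}) x e y t e' y' r :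
  is_walk G x ((e,y)::t ++ (e',y')::r) -> iok0 G W x ((e,y)::t ++ (e',y')::r) ->
  last y (map snd t) = y -> okv G W e y e'.
Proof.
move=> /= /andP [_ hw] hi hl.
rewrite walk_cat in hw; rewrite iok_cat in hi.
case/and3P: hw => hw _ _; case/and3P: hi => hi hok _.
apply/andP; split.
  apply/negP => /andP [hor hyW].
  have := okvW hok; rewrite hl => /(_ hyW) /andP [ha hb].
  have ie : into e.
    move: hi ha; case: (t) => [|[c z] t'] //= /andP [hc _] _.
    by case/andP: (okvW hc hyW).
  by rewrite hb ie in hor.
apply/negP => /and3P [ha hb /eqP hD].
have [w hwW hc] := chain ha hb hw hi hok.
rewrite hl in hc.
have : w \in De G y :&: W by rewrite !inE hc hwW.
by rewrite hD inE.
Qed.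

Lemma last_take_nth (V : eqType) (x : V) (s : seq (ekind * V)) p :
  p <= size s -> last x (map snd (take p s)) = nth x (wverts x s) p.
Proof.
move=> hp; rewrite map_take /wverts.
have hs : size (take p (map snd s)) = p by rewrite size_take size_map; case: ltngtP hp => //; lia.
rewrite -[last x (take p _)]/(last x (x :: take p (map snd s))) -nth_last /= hs.
rewrite -[x :: take p _]/(take p.+1 (x :: map snd s)).
by rewrite nth_take.
Qed.

Lemma last_idx_le (V : eqType) (x : V) (s : seq (ekind * V)) : last_idx x s <= size s.
Proof. by rewrite /last_idx /wverts /= size_map leq_subr. Qed.

Lemma last_take_idx (V : eqType) (x : V) (s : seq (ekind * V)) :
  last x (map snd (take (last_idx x s) s)) = x.
Proof.
rewrite last_take_nth ?last_idx_le //.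
set l := wverts x s.
have hx : x \in rev l by rewrite mem_rev /l /wverts mem_head.
have hi : index x (rev l) < size l by rewrite -size_rev index_mem.
have := nth_index x hx.
rewrite nth_rev ?size_rev // /last_idx -/l.
Qed.

Lemma fuel (V : eqType) f1 : forall f2 (x : V) s, size s <= f1 -> size s <= f2 ->
  primary_aux f1 x s = primary_aux f2 x s.
Proof.
elim: f1 => [|f1 IH] [|f2] x s /= h1 h2 //.
- by case: s h1 h2.
- by case: s h1 h2.
case hd: (drop (last_idx x s) s) => [|[e y] rest] //.
congr cons; apply: IH.
  have : size (drop (last_idx x s) s) = (size rest).+1 by rewrite hd.
  rewrite size_drop; lia.
have : size (drop (last_idx x s) s) = (size rest).+1 by rewrite hd.
rewrite size_drop; lia.
Qed.

Lemma primary_unfold (V : eqType) (x : V) s :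
  primary x s = match drop (last_idx x s) s with
                | [::] => [::]
                | (e,y)::rest => (e,y) :: primary y rest end.
Proof.
rewrite /primary; case: s => [|a s] //=.
case hd: (drop _ _) => [|[e y] rest] //.
congr cons; apply: fuel => //.
have : size (drop (last_idx x (a :: s)) (a :: s)) = (size rest).+1 by rewrite hd.
rewrite size_drop /=; lia.
Qed.

Lemma primary_iok (V : finType) (G : mgraph V) (W : {set V}) n :
  forall x s, size s <= n -> is_walk G x s -> iok0 G W x s -> iok0 G W x (primary x s).
Proof.
elim: n => [|n IH] x s hs hw hi.
  by case: s hs {hw hi}.
rewrite primary_unfold.
set p := last_idx x s.
case hd: (drop p s) => [|[e y] rest] //.
have hsplit : s = take p s ++ (e,y)::rest by rewrite -hd cat_take_drop.
have hl : last x (map snd (take p s)) = x := last_take_idx x s.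
have hw' : is_walk G x ((e,y)::rest).
  move: hw; rewrite {1}hsplit walk_cat => /and3P [_ he hr] /=.
  by rewrite -{1}hl he hr.
have hi' : iok0 G W x ((e,y)::rest).
  move: hi; rewrite {1}hsplit; case: (take p s) => [|[a v] t] //=.
  by rewrite iok_cat => /and3P [_ _ ->].
have hsz : size rest <= n.
  have : size (drop p s) = (size rest).+1 by rewrite hd.
  rewrite size_drop; lia.
have hwr : is_walk G y rest by case/andP: hw'.
have hir : iok0 G W y rest.
  by move: hi'; rewrite /=; case: (rest) => [|[b w] r] //= /andP [].
have := IH y rest hsz hwr hir.
rewrite /= primary_unfold.
case hd2: (drop (last_idx y rest) rest) => [|[e' y'] rest'] //= hI.
rewrite hI andbT.
have hsplit2 : rest = take (last_idx y rest) rest ++ (e',y')::rest'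
  by rewrite -hd2 cat_take_drop.
rewrite hsplit2 in hw' hi'.
exact: okstep hw' hi' (last_take_idx y rest).
Qed.

Lemma primary_last (V : eqType) n :
  forall (x : V) s, size s <= n -> last x (map snd (primary x s)) = last x (map snd s).
Proof.
elim: n => [|n IH] x s hs.
  by case: s hs.
rewrite primary_unfold.
set p := last_idx x s.
have hl : last x (map snd (take p s)) = x := last_take_idx x s.
case hd: (drop p s) => [|[e y] rest] /=.
  by rewrite -(cat_take_drop p s) hd cats0 hl.
have hsz : size rest <= n.
  have : size (drop p s) = (size rest).+1 by rewrite hd.
  rewrite size_drop; lia.
by rewrite IH // -[in RHS](cat_take_drop p s) hd map_cat last_cat hl.
Qed.

Lemma iok_nth (V : finType) (G : mgraph V) (W : {set V}) s : forall a v,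
  iok G W a v s <-> (forall k, k < size s ->
     okv G W (nth EBi (a :: map fst s) k) (nth v (v :: map snd s) k) (nth EBi (map fst s) k)).
Proof.
elim: s => [|[b w] s IH] a v /=; first by split.
split.
  move=> /andP [h1 /IH h2] [|k] //= hk.
  rewrite ltnS in hk.
  rewrite (set_nth_default w) /=; last by rewrite size_map ltnS ltnW.
  exact: h2.
move=> h; apply/andP; split; first exact: (h 0).
apply/IH => k hk; have := h k.+1 hk.
have hk2 : k < size (w :: map snd s) by rewrite /= size_map ltnS ltnW.
by rewrite /= (set_nth_default w v hk2).
Qed.

Lemma iok0_nth (V : finType) (G : mgraph V) (W : {set V}) x s :
  iok0 G W x s <-> (forall i, 0 < i -> i < size s ->
    okv G W (nth EBi (map fst s) i.-1) (nth x (wverts x s) i) (nth EBi (map fst s) i)).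
Proof.
case: s => [|[a v] s] /=; first by split.
rewrite iok_nth; split => h.
  move=> [|k] // _ hk; have := h k hk.
  have hk2 : k < size (v :: map snd s) by rewrite /= size_map; lia.
  by rewrite /wverts /= (set_nth_default x v hk2).
move=> k hk; have := h k.+1 erefl hk.
have hk2 : k < size (v :: map snd s) by rewrite /= size_map; lia.
by rewrite /wverts /= (set_nth_default x v hk2).
Qed.

Lemma okv_neg (V : finType) (G : mgraph V) (W : {set V}) a v b :
  ~~ okv G W a v b <-> ((b = EFwd \/ a = EBwd) /\ v \in W) \/
     ((a = EFwd \/ a = EBi) /\ (b = EBwd \/ b = EBi) /\ De G v :&: W = set0).
Proof.
rewrite /okv.
case: (eqVneq (De G v :&: W) set0) => [->|hD].
  case: (v \in W); case: a; case: b => /=; intuition (try discriminate); try done.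
have hD' : De G v :&: W <> set0 by apply/eqP.
case: (v \in W); case: a; case: b => /=; intuition (try discriminate); try done.
Qed.

Lemma active_iff (V : finType) (G : mgraph V) (W : {set V}) x s :
  active G W x s <-> [/\ x \notin W, last x (map snd s) \notin W & iok0 G W x s].
Proof.
rewrite /active /blocked /=; split.
  move=> h; split.
  - by apply/negP => hx; apply: h; left.
  - by apply/negP => hl; apply: h; right; left.
  apply/iok0_nth => i hi0 his; apply/negPn/negP => hn; apply: h; right; right; exists i.
  split => //; first by rewrite size_map.
  exact/okv_neg.
case=> hx hl /iok0_nth hi [h|[h|[i [hi0 his hc]]]].
- by rewrite h in hx.
- by rewrite h in hl.
rewrite size_map in his.
move: (hi i hi0 his); apply/negP; apply/okv_neg; exact: hc.
Qed.

Theorem mainTheorem6 (V : finType) (G : mgraph V) (W : {set V})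
    (x : V) (s : seq (ekind * V)) :
  (is_ADMG G \/ is_CDMG G) ->
  is_walk G x s ->
  active G W x s ->
  active G W x (primary x s).
Proof.
move=> _ hw /active_iff [hx hl hi].
apply/active_iff; split => //.
  by rewrite (@primary_last _ (size s)).
exact: (@primary_iok _ G W (size s) x s (leqnn _)).
Qed.
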